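(* Let $\pi=\sigma_0,\sigma_1,\dots,\sigma_t=\tau$ be permutations in $S_n$ such that for each $0\le m<t$, $\sigma_{m+1}$ is obtained from $\sigma_m$ by exchanging two entries in adjacent positions $p,p+1$. Say that such a step puts the pair in decreasing order if the entry in position $p$ is smaller than the entry in position $p+1$ in $\sigma_m$ (so it is larger in $\sigma_{m+1}$), and in increasing order otherwise. Suppose $s$ of the steps put the pair in decreasing order and $r$ in increasing order, so $r+s=t$. Let $\lambda=\lambda(\pi)$, $\mu=\lambda(\tau)$ (parts padded with zeros). Then for every $1\le j\le n$, \[\sum_{i=1}^j\mu_i-r\le\sum_{i=1}^j\lambda_i\le\sum_{i=1}^j\mu_i+s.\]
   Context: Permutations are written in one-line notation. For $\pi\in S_n$, $\lambda(\pi)$ denotes the shape of the tableaux associated with $\pi$ by the RSK correspondence. *)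

(* Defs.v *)
From mathcomp Require Import all_boot all_fingroup.
Set Implicit Arguments. Unset Strict Implicit. Unset Printing Implicit Defensive.

(* One-line notation of a permutation of 'I_n: [:: s 0; s 1; ...; s (n-1)]
   (values in {0,...,n-1}; RSK shapes are invariant under the shift to 1..n). *)
Definition oneline n (s : 'S_n) : seq nat := [seq val (s i) | i <- enum 'I_n].

Fixpoint row_ins (row : seq nat) (x : nat) : option nat * seq nat :=
  match row with
  | [::] => (None, [:: x])
  | y :: row' => if x < y then (Some y, x :: row')
                 else let: (b, r') := row_ins row' x in (b, y :: r')
  end.

Fixpoint tab_ins (T : seq (seq nat)) (x : nat) : seq (seq nat) :=
  match T with
  | [::] => [:: [:: x]]
  | r :: T' => match row_ins r x with
               | (None, r') => r' :: T'
               | (Some y, r') => r' :: tab_ins T' y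
               end
  end.

Definition rsk_P (w : seq nat) : seq (seq nat) := foldl tab_ins [::] w.
Definition rsk_shape n (s : 'S_n) : seq nat := map size (rsk_P (oneline s)).

(* i-th part (0-indexed) of a shape, padded with zeros. *)
Definition part (la : seq nat) (i : nat) : nat := nth 0 la i.

Definition swap_adj (s : seq nat) (p : nat) : seq nat :=
  set_nth 0 (set_nth 0 s p (nth 0 s p.+1)) p.+1 (nth 0 s p).

Definition dec_step n (sig : nat -> 'S_n) (pos : nat -> nat) (m : nat) : bool :=
  nth 0 (oneline (sig m)) (pos m) < nth 0 (oneline (sig m)) (pos m).+1.

(* Main.v *)
Require Import Defs.
From mathcomp Require Import all_boot all_fingroup.
From mathcomp Require Import zify.
Set Implicit Arguments. Unset Strict Implicit. Unset Printing Implicit Defensive.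

Definition F (k : nat) (t : seq (nat * nat)) : seq nat :=
  [seq e.1 | e <- t & e.2 == k].
Definition ok (j : nat) (s : seq (nat * nat)) :=
  forall k, k < j -> pairwise ltn (F k s).
Definition vl (j : nat) (s : seq (nat * nat)) := count (fun e => e.2 < j) s.
Definition ach j (w : seq nat) m :=
  exists s, unzip1 s = w /\ ok j s /\ m <= vl j s.

Lemma F_cat k s1 s2 : F k (s1 ++ s2) = F k s1 ++ F k s2.
Proof. by rewrite /F filter_cat map_cat. Qed.

Lemma F_cons k a c t : F k ((a, c) :: t) = if c == k then a :: F k t else F k t.
Proof. by rewrite /F /=; case: (c == k). Qed.

Lemma val_cat j s1 s2 : vl j (s1 ++ s2) = vl j s1 + vl j s2.
Proof. exact: count_cat. Qed.

Lemma all_lt_trans L x y : all (fun a => a < x) L -> x < y -> all (fun a => a < y) L.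
Proof. move=> H xy; apply: sub_all H => a ax; exact: ltn_trans ax xy. Qed.

Lemma all_gt_trans L x y : all (fun a => y < a) L -> x < y -> all (fun a => x < a) L.
Proof. move=> H xy; apply: sub_all H => a ax; exact: ltn_trans xy ax. Qed.

Lemma pw_build L1 M L2 lo hi :
  pairwise ltn L1 -> pairwise ltn M -> pairwise ltn L2 ->
  all (fun a => a < lo) L1 -> all (fun b => lo <= b <= hi) M ->
  all (fun a => hi < a) L2 -> lo <= hi -> pairwise ltn (L1 ++ M ++ L2).
Proof.
move=> p1 pM p2 a1 aM a2 lh; rewrite !pairwise_cat p1 pM p2 !andbT.
apply/andP; split.
  rewrite allrel_catr; apply/andP; split; apply/allrelP => a b ain bin.
    move/allP: a1 => /(_ a ain); move/allP: aM => /(_ b bin); lia.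
  move/allP: a1 => /(_ a ain); move/allP: a2 => /(_ b bin); lia.
apply/allrelP => a b ain bin.
move/allP: aM => /(_ a ain); move/allP: a2 => /(_ b bin); lia.
Qed.

Lemma pw_ext L1 M L2 : pairwise ltn (L1 ++ M ++ L2) ->
  [/\ pairwise ltn L1, pairwise ltn L2 &
     forall a, a \in M -> all (fun b => b < a) L1 /\ all (fun b => a < b) L2].
Proof.
rewrite !pairwise_cat allrel_catr => /and3P [/andP[r1 r2] p1 /and3P[r3 pM p2]].
split=> // a ain; split; apply/allP => b bin.
  by move/allrelP: r1 => /(_ b a bin ain).
by move/allrelP: r3 => /(_ a b ain bin).
Qed.

Definition swn (A B k : nat) : nat := if k == A then B else if k == B then A else k.
Definition swc A B (e : nat * nat) := (e.1, swn A B e.2).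

Lemma swn_eq A B c k : (swn A B c == k) = (c == swn A B k).
Proof.
rewrite /swn; case: (c =P A) => ?; case: (k =P A) => ?;
 case: (c =P B) => ?; case: (k =P B) => ? /=; apply/eqP/eqP; lia.
Qed.

Lemma F_swc A B k t : F k (map (swc A B) t) = F (swn A B k) t.
Proof.
elim: t => [|[a c] t IH] //=; rewrite !F_cons -IH /= swn_eq.
by case: (c == swn A B k).
Qed.

Lemma val_swc j A B t : A < j -> B < j -> vl j (map (swc A B) t) = vl j t.
Proof.
move=> Aj Bj; rewrite /vl count_map; apply: eq_count => -[a c] /=.
rewrite /swn; case: (c =P A) => [->|_]; first by rewrite Aj Bj.
by case: (c =P B) => [->|_]; rewrite ?Aj ?Bj.
Qed.

Lemma unzip_split (s : seq (nat * nat)) u t : unzip1 s = u ++ t ->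
  exists su st, s = su ++ st /\ unzip1 su = u /\ unzip1 st = t.
Proof.
move=> H; exists (take (size u) s), (drop (size u) s); split; first by rewrite cat_take_drop.
by rewrite /unzip1 map_take map_drop -/(unzip1 s) H take_size_cat // drop_size_cat.
Qed.

Lemma unzip_cons (s : seq (nat * nat)) a t : unzip1 s = a :: t ->
  exists c st, s = (a, c) :: st /\ unzip1 st = t.
Proof. by case: s => [|[a' c] st] //= [-> <-]; exists c, st. Qed.

Lemma ok_swap j su sv a ca b cb : ok j (su ++ (a, ca) :: (b, cb) :: sv) ->
  ~~ ((ca == cb) && (ca < j)) -> ok j (su ++ (b, cb) :: (a, ca) :: sv).
Proof.
move=> H ne k kj; have := H k kj; rewrite !F_cat !F_cons.
move: ne; case: (ca =P k) => [->|_]; case: (cb =P k) => [->|_] //.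
by rewrite eqxx kj.
Qed.

Lemma val_swap j su sv e1 e2 :
  vl j (su ++ e1 :: e2 :: sv) = vl j (su ++ e2 :: e1 :: sv).
Proof. rewrite !val_cat /vl /=; lia. Qed.

Lemma ach_swap j u v a b m : a < b -> ach j (u ++ b :: a :: v) m ->
  ach j (u ++ a :: b :: v) m.
Proof.
move=> ab [s [Hs [Ho Hv]]].
case: (unzip_split Hs) => su [st [Es [Hu Ht]]]; subst s.
case: (unzip_cons Ht) => cb [st1 [Es Ht1]]; subst st.
case: (unzip_cons Ht1) => ca [sv [Es Hv']]; subst st1.
exists (su ++ (a, ca) :: (b, cb) :: sv); split; first by rewrite /unzip1 map_cat /= -/(unzip1 su) -/(unzip1 sv) Hu Hv'.
split; last by rewrite -val_swap.
apply: ok_swap => //; apply/negP => /andP [/eqP E cj].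
have := Ho cb cj; rewrite F_cat !F_cons E eqxx pairwise_cat /= => /and3P [_ _].
by rewrite ltnNge ltnW.
Qed.

Lemma ach_drop j u v a b m : a < b -> ach j (u ++ a :: b :: v) m ->
  ach j (u ++ b :: a :: v) m.-1.
Proof.
move=> ab [s [Hs [Ho Hv]]].
case: (unzip_split Hs) => su [st [Es [Hu Ht]]]; subst s.
case: (unzip_cons Ht) => ca [st1 [Es Ht1]]; subst st.
case: (unzip_cons Ht1) => cb [sv [Es Hv']]; subst st1.
case E: ((ca == cb) && (ca < j)).
  move/andP: E => [/eqP E cj]; subst cb.
  exists (su ++ (b, j) :: (a, ca) :: sv); split; first by rewrite /unzip1 map_cat /= -/(unzip1 su) -/(unzip1 sv) Hu Hv'.
  split.
    move=> k kj; have := Ho k kj; rewrite !F_cat !F_cons.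
    have -> : (j == k) = false by apply/negbTE; rewrite neq_ltn kj orbT.
    case: (ca =P k) => // _ /(@pw_ext _ [:: a; b]) [p1 p2 Hm].
    case: (Hm a); first by rewrite inE eqxx.
    case: (Hm b); first by rewrite !inE eqxx orbT.
    move=> _ Hb Ha _; apply: (@pw_build _ [:: a] _ a a) => //=.
      by rewrite leqnn.
    exact: all_gt_trans Hb ab.
  move: Hv; rewrite !val_cat /vl /= ltnn cj; lia.
exists (su ++ (b, cb) :: (a, ca) :: sv); split; first by rewrite /unzip1 map_cat /= -/(unzip1 su) -/(unzip1 sv) Hu Hv'.
split; first by apply: ok_swap => //; rewrite E.
by rewrite -val_swap; apply: leq_trans Hv; apply: leq_pred.
Qed.

Lemma swnA A B : swn A B A = B. Proof. by rewrite /swn eqxx. Qed.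
Lemma swnB A B : A != B -> swn A B B = A.
Proof. by rewrite /swn eq_sym => /negbTE ->; rewrite eqxx. Qed.
Lemma swnO A B k : k != A -> k != B -> swn A B k = k.
Proof. by rewrite /swn => /negbTE -> /negbTE ->. Qed.

Lemma unzip_swc A B t : unzip1 (map (swc A B) t) = unzip1 t.
Proof. by elim: t => [|e t IH] //=; rewrite IH. Qed.

Ltac decomp3 Hs :=
  let su := fresh "su" in let st := fresh "st" in let Es := fresh "Es" in
  let Hu := fresh "Hu" in let Ht := fresh "Ht" in
  case: (unzip_split Hs) => su [st [Es [Hu Ht]]]; subst;
  let c1 := fresh "c" in let st1 := fresh "st" in let Ht1 := fresh "Ht" in
  case: (unzip_cons Ht) => c1 [st1 [Es Ht1]]; subst;
  let c2 := fresh "c" in let st2 := fresh "st" in let Ht2 := fresh "Ht" in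
  case: (unzip_cons Ht1) => c2 [st2 [Es Ht2]]; subst;
  let c3 := fresh "c" in let st3 := fresh "sv" in let Ht3 := fresh "Hv" in
  case: (unzip_cons Ht2) => c3 [st3 [Es Ht3]]; subst.

Lemma ach_kn1f j u v x y z m : x < y -> y < z ->
  ach j (u ++ [:: x; z; y] ++ v) m -> ach j (u ++ [:: z; x; y] ++ v) m.
Proof.
move=> xy yz [s [Hs [Ho Hv]]]; decomp3 Hs.
rename c into ca; rename c0 into cb; rename c1 into cc.
case E: ((ca == cb) && (ca < j)); last first.
  exists (su ++ (z, cb) :: (x, ca) :: (y, cc) :: sv); split.
    by rewrite /unzip1 map_cat.
  split; last by rewrite -val_swap.
  by apply: ok_swap => //; rewrite E.
move/andP: E => [/eqP E Aj]; subst cb.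
have HA := Ho ca Aj; rewrite F_cat !F_cons eqxx in HA.
have ccA : cc != ca.
  apply/eqP => E; move: HA; rewrite E eqxx pairwise_cat /= => /and3P [_ _ /and4P [_ /andP [zy _] _ _]].
  by move: zy; rewrite ltnNge ltnW.
rewrite (negbTE ccA) in HA.
case/(@pw_ext _ [:: x; z]): HA => pA1 pA2 HmA.
case: (HmA x); first by rewrite inE eqxx.
case: (HmA z); first by rewrite !inE eqxx orbT.
move=> _ Az Ax _.
case: (ltnP cc j) => ccj.
- have HB := Ho cc ccj; rewrite F_cat !F_cons eqxx eq_sym (negbTE ccA) in HB.
  case/(@pw_ext _ [:: y]): HB => pB1 pB2 HmB.
  case: (HmB y); first by rewrite inE eqxx.
  move=> By1 By2.
  exists (su ++ (z, cc) :: (x, ca) :: (y, ca) :: map (swc ca cc) sv); split.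
    by rewrite /unzip1 map_cat /= -/(unzip1 (map _ sv)) unzip_swc.
  split; last first.
    move: Hv; rewrite !val_cat /vl /= -/(vl j (map (swc ca cc) sv)) -/(vl j sv) val_swc // Aj ccj; lia.
  move=> k kj; rewrite F_cat !F_cons F_swc.
  case: (k =P ca) => [->|kA].
    rewrite (negbTE ccA) eqxx swnA.
    apply: (@pw_build _ [:: x; y] _ x y) => //=; try lia.
  case: (k =P cc) => [->|kB].
    rewrite eq_sym (negbTE ccA) eqxx swnB // 1?eq_sym //.
    apply: (@pw_build _ [:: z] _ z z) => //=; rewrite ?leqnn //.
    exact: all_lt_trans By1 yz.
  have -> : (ca == k) = false by apply/eqP => E; apply: kA.
  have -> : (cc == k) = false by apply/eqP => E; apply: kB.
  rewrite swnO; try by apply/eqP.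
  have := Ho k kj; rewrite F_cat !F_cons.
  have -> : (ca == k) = false by apply/eqP => E; apply: kA.
  by have -> : (cc == k) = false by apply/eqP => E; apply: kB.
- exists (su ++ (z, cc) :: (x, ca) :: (y, ca) :: sv); split.
    by rewrite /unzip1 map_cat.
  split; last first.
    move: Hv; rewrite !val_cat /vl /= Aj ltnNge ccj /=; lia.
  move=> k kj; rewrite F_cat !F_cons.
  have -> : (cc == k) = false by apply/eqP => E; move: ccj; rewrite E leqNgt kj.
  case: (k =P ca) => [->|kA].
    rewrite eqxx.
    apply: (@pw_build _ [:: x; y] _ x y) => //=; try lia.
    exact: all_gt_trans Az yz.
  have -> : (ca == k) = false by apply/eqP => E; apply: kA.
  have := Ho k kj; rewrite F_cat !F_cons.
  have -> : (ca == k) = false by apply/eqP => E; apply: kA.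
  by have -> : (cc == k) = false by apply/eqP => E; move: ccj; rewrite E leqNgt kj.
Qed.

Lemma ach_kn2f j u v x y z m : x < y -> y < z ->
  ach j (u ++ [:: y; x; z] ++ v) m -> ach j (u ++ [:: y; z; x] ++ v) m.
Proof.
move=> xy yz [s [Hs [Ho Hv]]]; decomp3 Hs.
rename c into cc; rename c0 into ca; rename c1 into cb.
case E: ((ca == cb) && (ca < j)); last first.
  exists (su ++ (y, cc) :: (z, cb) :: (x, ca) :: sv); split.
    by rewrite /unzip1 map_cat.
  split; last by move: Hv; rewrite !val_cat /vl /=; lia.
  rewrite -cat1s catA; apply: ok_swap; last by rewrite E.
  by rewrite -catA.
move/andP: E => [/eqP E Aj]; subst cb.
have HA := Ho ca Aj; rewrite F_cat !F_cons eqxx in HA.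
have ccA : cc != ca.
  apply/eqP => E; move: HA; rewrite E eqxx pairwise_cat /= => /and3P [_ _ /and3P [/andP [yx _] _ _]].
  by move: yx; rewrite ltnNge ltnW.
rewrite (negbTE ccA) in HA.
case/(@pw_ext _ [:: x; z]): HA => pA1 pA2 HmA.
case: (HmA x); first by rewrite inE eqxx.
case: (HmA z); first by rewrite !inE eqxx orbT.
move=> _ Az Ax _.
case: (ltnP cc j) => ccj.
- have HB := Ho cc ccj; rewrite F_cat !F_cons eqxx eq_sym (negbTE ccA) in HB.
  case/(@pw_ext _ [:: y]): HB => pB1 pB2 HmB.
  case: (HmB y); first by rewrite inE eqxx.
  move=> By1 By2.
  exists (su ++ (y, cc) :: (z, cc) :: (x, ca) :: map (swc ca cc) sv); split.
    by rewrite /unzip1 map_cat /= -/(unzip1 (map _ sv)) unzip_swc.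
  split; last first.
    move: Hv; rewrite !val_cat /vl /= -/(vl j (map (swc ca cc) sv)) -/(vl j sv) val_swc // Aj ccj; lia.
  move=> k kj; rewrite F_cat !F_cons F_swc.
  case: (k =P ca) => [->|kA].
    rewrite (negbTE ccA) eqxx swnA.
    apply: (@pw_build _ [:: x] _ x x) => //=; try lia.
    exact: all_gt_trans By2 xy.
  case: (k =P cc) => [->|kB].
    rewrite eq_sym (negbTE ccA) eqxx swnB // 1?eq_sym //.
    apply: (@pw_build _ [:: y; z] _ y z) => //=; try lia.
  have -> : (ca == k) = false by apply/eqP => E; apply: kA.
  have -> : (cc == k) = false by apply/eqP => E; apply: kB.
  rewrite swnO; try by apply/eqP.
  have := Ho k kj; rewrite F_cat !F_cons.
  have -> : (ca == k) = false by apply/eqP => E; apply: kA.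
  by have -> : (cc == k) = false by apply/eqP => E; apply: kB.
- exists (su ++ (y, ca) :: (z, ca) :: (x, cc) :: sv); split.
    by rewrite /unzip1 map_cat.
  split; last first.
    move: Hv; rewrite !val_cat /vl /= Aj ltnNge ccj /=; lia.
  move=> k kj; rewrite F_cat !F_cons.
  have -> : (cc == k) = false by apply/eqP => E; move: ccj; rewrite E leqNgt kj.
  case: (k =P ca) => [->|kA].
    rewrite eqxx.
    apply: (@pw_build _ [:: y; z] _ y z) => //=; try lia.
    exact: all_lt_trans Ax xy.
  have -> : (ca == k) = false by apply/eqP => E; apply: kA.
  have := Ho k kj; rewrite F_cat !F_cons.
  have -> : (ca == k) = false by apply/eqP => E; apply: kA.
  by have -> : (cc == k) = false by apply/eqP => E; move: ccj; rewrite E leqNgt kj.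
Qed.

Inductive knuth : seq nat -> seq nat -> Prop :=
| kn_refl w : knuth w w
| kn_sym w w' : knuth w w' -> knuth w' w
| kn_trans w1 w2 w3 : knuth w1 w2 -> knuth w2 w3 -> knuth w1 w3
| kn1 u v x y z : x < y -> y < z ->
    knuth (u ++ [:: x; z; y] ++ v) (u ++ [:: z; x; y] ++ v)
| kn2 u v x y z : x < y -> y < z ->
    knuth (u ++ [:: y; x; z] ++ v) (u ++ [:: y; z; x] ++ v).

Lemma knuth_ach w w' : knuth w w' -> forall j m, ach j w m <-> ach j w' m.
Proof.
elim=> {w w'}.
- by [].
- by move=> w w' _ IH j m; rewrite IH.
- by move=> w1 w2 w3 _ IH1 _ IH2 j m; rewrite IH1 IH2.
- move=> u v x y z xy yz j m; split; first exact: ach_kn1f.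
  by apply: (ach_swap (v := y :: v)); apply: ltn_trans yz.
- move=> u v x y z xy yz j m; split; first exact: ach_kn2f.
  move=> H; have := @ach_swap j (u ++ [:: y]) v x z m (ltn_trans xy yz).
  by rewrite -!catA; apply.
Qed.

Lemma knuth_catl t w w' : knuth w w' -> knuth (t ++ w) (t ++ w').
Proof.
elim=> {w w'}; try by econstructor; eauto.
- move=> u v x y z xy yz; have H := kn1 (t ++ u) v xy yz; by rewrite -!catA in H *.
- move=> u v x y z xy yz; have H := kn2 (t ++ u) v xy yz; by rewrite -!catA in H *.
Qed.

Lemma knuth_catr t w w' : knuth w w' -> knuth (w ++ t) (w' ++ t).
Proof.
elim=> {w w'}; try by econstructor; eauto.
- move=> u v x y z xy yz; have H := kn1 u (v ++ t) xy yz; by rewrite -!catA /= in H *.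
- move=> u v x y z xy yz; have H := kn2 u (v ++ t) xy yz; by rewrite -!catA /= in H *.
Qed.

Definition oseq (o : option nat) : seq nat := if o is Some y then [:: y] else [::].

Lemma row_ins_perm r x : perm_eq (x :: r) (oseq (row_ins r x).1 ++ (row_ins r x).2).
Proof.
elim: r => [|c r IH] //=.
case: ifP => _ /=; first by apply/seq.permP => p /=; lia.
case E: (row_ins r x) => [b r'] /=; rewrite E /= in IH.
move/seq.permP: IH => IH; apply/seq.permP => p; have := IH p; rewrite /= !count_cat /=; lia.
Qed.

Lemma row_ins_bump r x y : row_ins r x = (Some y, (row_ins r x).2) -> x < y.
Proof.
elim: r => [|c r IH] //=; case: ifP => xc; first by case=> <-.
by case E: (row_ins r x) => [b r'] /=; rewrite E /= in IH; case=> Eb; apply: IH; rewrite Eb.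
Qed.

Lemma row_ins_mem r x z : z \in (row_ins r x).2 -> (z == x) || (z \in r).
Proof.
move=> zin; have := row_ins_perm r x; move/perm_mem => /(_ z).
by rewrite mem_cat zin orbT inE => ->.
Qed.

Lemma row_ins_bmem r x y : (row_ins r x).1 = Some y -> y \in r.
Proof.
move=> E; have := row_ins_perm r x; move/perm_mem => /(_ y).
rewrite E /= [y \in y :: _]inE eqxx /= inE => /orP [/eqP yx|] //.
subst; have := @row_ins_bump r x x; rewrite ltnn => H; exfalso.
by suff: false by []; apply: H; move: E; case: (row_ins r x) => ? ? /= ->.
Qed.

Lemma row_ins_pw r x : pairwise ltn r -> x \notin r -> pairwise ltn (row_ins r x).2.
Proof.
elim: r => [|c r IH] //=; rewrite inE negb_or => /andP [ac pr] /andP [xc xr].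
case: ifP => cx /=.
  rewrite pr andbT; apply/allP => z zr; apply: ltn_trans cx _.
  by move/allP: ac; apply.
case E: (row_ins r x) => [b r'] /=; rewrite E /= in IH.
rewrite IH // andbT; apply/allP => z zin.
have : z \in (row_ins r x).2 by rewrite E.
move/row_ins_mem => /orP [/eqP ->|].
  by move: xc cx => /eqP; rewrite /ltn /=; lia.
by move/allP: ac; apply.
Qed.

Lemma knuth_bubble c r0 x : pairwise ltn (c :: r0) -> x < c ->
  knuth (c :: r0 ++ [:: x]) (c :: x :: r0).
Proof.
elim: r0 c => [|d r1 IH] c; first by constructor.
rewrite /= => /andP [/andP [cd cr1] /andP [dr1 pr1]] xc.
apply: kn_trans (_ : knuth (c :: d :: x :: r1) _).
  apply: (knuth_catl [:: c]); apply: IH; first by rewrite /= dr1.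
  exact: ltn_trans xc cd.
by apply: kn_sym; apply: (kn2 [::] r1 xc cd).
Qed.

Lemma row_ins_head r x y r' : pairwise ltn r -> row_ins r x = (Some y, r') ->
  exists h t, r' = h :: t /\ h < y.
Proof.
case: r => [|c r0] //= /andP [ac _]; case: ifP => xc.
  by case=> <- <-; exists x, r0.
case E: (row_ins r0 x) => [b r0'] [Eb <-]; subst b.
exists c, r0'; split => //.
have : y \in r0 by apply: (@row_ins_bmem r0 x); rewrite E.
by move/allP: ac; apply.
Qed.

Lemma knuth_row r x y r' : pairwise ltn r -> x \notin r ->
  row_ins r x = (Some y, r') -> knuth (r ++ [:: x]) (y :: r').
Proof.
elim: r r' => [|c r0 IH] r' //=.
move=> /andP [ac pr0]; rewrite inE negb_or => /andP [xc xr0].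
case: ifP => cx.
  by case=> <- <-; apply: knuth_bubble => //=; rewrite ac.
case E: (row_ins r0 x) => [b r0'] [Eb <-]; subst b.
have [h [t [Er ht]]] := row_ins_head pr0 E.
apply: kn_trans (_ : knuth (c :: y :: r0') _).
  by apply: (knuth_catl [:: c]); apply: IH.
have ch : c < h.
  have : h \in (row_ins r0 x).2 by rewrite E Er inE eqxx.
  move/row_ins_mem => /orP [/eqP ->|].
    by move: xc cx => /eqP; rewrite /ltn /=; lia.
  by move/allP: ac; apply.
rewrite Er; exact: (kn1 [::] t ch ht).
Qed.

Lemma row_ins_none r x r' : row_ins r x = (None, r') -> r' = rcons r x.
Proof.
elim: r r' => [|c r IH] r' /=; first by case=> <-.
case: ifP => // _; case E: (row_ins r x) => [b r0] [Eb <-]; subst b.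
by rewrite (IH _ E).
Qed.

Definition reading (T : seq (seq nat)) : seq nat := flatten (rev T).

Lemma reading_cons R T : reading (R :: T) = reading T ++ R.
Proof. by rewrite /reading rev_cons -cats1 flatten_cat /= cats0. Qed.

Lemma tab_ins_rows T x : all (pairwise ltn) T -> uniq (x :: flatten T) ->
  all (pairwise ltn) (tab_ins T x) /\ perm_eq (flatten (tab_ins T x)) (x :: flatten T).
Proof.
elim: T x => [|R0 T IH] x /=; first by [].
move=> /andP [pR0 pT]; rewrite cat_uniq mem_cat negb_or -andbA => /and5P [xR0 xT uR0 dis uT].
have Hp := row_ins_perm R0 x.
have pr' := row_ins_pw pR0 xR0.
case E: (row_ins R0 x) => [[y|] r'] /=; rewrite E /= in Hp pr'.
- have yR0 : y \in R0 by apply: (@row_ins_bmem R0 x); rewrite E.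
  have yT : y \notin flatten T by apply/negP => yT; move/hasPn: dis => /(_ y yT) /negP; apply.
  have [IH1 IH2] : all (pairwise ltn) (tab_ins T y) /\ perm_eq (flatten (tab_ins T y)) (y :: flatten T).
    by apply: IH => //=; rewrite yT uT.
  split; first by rewrite pr'.
  apply/seq.permP => p; move/seq.permP: Hp => /(_ p); move/seq.permP: IH2 => /(_ p).
  rewrite /= !count_cat /=; lia.
- split; first by rewrite pr'.
  apply/seq.permP => p; move/seq.permP: Hp => /(_ p); rewrite /= !count_cat /=; lia.
Qed.

Lemma knuth_tab T x : all (pairwise ltn) T -> uniq (x :: flatten T) ->
  knuth (reading T ++ [:: x]) (reading (tab_ins T x)).
Proof.
elim: T x => [|R0 T IH] x /=; first by constructor.
move=> /andP [pR0 pT]; rewrite cat_uniq mem_cat negb_or -andbA => /and5P [xR0 xT uR0 dis uT].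
rewrite reading_cons.
case E: (row_ins R0 x) => [[y|] r'] /=.
- have yR0 : y \in R0 by apply: (@row_ins_bmem R0 x); rewrite E.
  have yT : y \notin flatten T by apply/negP => yT; move/hasPn: dis => /(_ y yT) /negP; apply.
  rewrite reading_cons -catA.
  apply: kn_trans (_ : knuth (reading T ++ y :: r') _).
    by apply: knuth_catl; apply: knuth_row.
  rewrite -cat1s catA; apply: knuth_catr; apply: IH => //=; by rewrite yT uT.
- by rewrite (row_ins_none E) reading_cons -cats1 catA; constructor.
Qed.

Lemma rsk_P_rcons w x : rsk_P (rcons w x) = tab_ins (rsk_P w) x.
Proof. by rewrite /rsk_P foldl_rcons. Qed.

Lemma rsk_rows w : uniq w ->
  all (pairwise ltn) (rsk_P w) /\ perm_eq (flatten (rsk_P w)) w.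
Proof.
elim/last_ind: w => [|w x IH] //; rewrite rcons_uniq => /andP [xw uw].
have [H1 H2] := IH uw; rewrite rsk_P_rcons.
have U : uniq (x :: flatten (rsk_P w)) by rewrite /= (perm_uniq H2) (perm_mem H2) xw uw.
have [G1 G2] := tab_ins_rows H1 U; split => //.
apply: perm_trans G2 _; rewrite perm_sym perm_rcons perm_cons perm_sym //.
Qed.

Lemma rsk_knuth w : uniq w -> knuth (reading (rsk_P w)) w.
Proof.
elim/last_ind: w => [|w x IH]; first by constructor.
rewrite rcons_uniq => /andP [xw uw].
have [H1 H2] := rsk_rows uw; rewrite rsk_P_rcons.
have U : uniq (x :: flatten (rsk_P w)) by rewrite /= (perm_uniq H2) (perm_mem H2) xw uw.
apply: kn_trans (kn_sym (knuth_tab H1 U)) _.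
rewrite -cats1; apply: knuth_catr; exact: IH.
Qed.

Definition colok (R R' : seq nat) : bool :=
  (size R' <= size R) && all (fun c => nth 0 R c < nth 0 R' c) (iota 0 (size R')).

Lemma colokP R R' : reflect (size R' <= size R /\
  forall c, c < size R' -> nth 0 R c < nth 0 R' c) (colok R R').
Proof.
apply: (iffP andP) => [[H1 /allP H2]|[H1 H2]]; split => //.
  by move=> c cs; apply: H2; rewrite mem_iota.
by apply/allP => c; rewrite mem_iota => /andP [_ cs]; apply: H2.
Qed.

Lemma pw_nth s i j : pairwise ltn s -> i < j -> j < size s -> nth 0 s i < nth 0 s j.
Proof.
move=> ps ij js; rewrite -sorted_pairwise in ps; last exact: ltn_trans.
apply: (sorted_ltn_nth ltn_trans 0 ps) => //; rewrite inE //; exact: ltn_trans ij js.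
Qed.

Lemma row_insE r x : row_ins r x = if has (ltn x) r then
   (Some (nth 0 r (find (ltn x) r)), set_nth 0 r (find (ltn x) r) x)
   else (None, rcons r x).
Proof.
elim: r => [|c r IH] //=; case: ifP => xc //=.
by rewrite IH; case: ifP.
Qed.

Lemma colok_ins R0 R1 x y R0' : pairwise ltn R0 -> colok R0 R1 ->
  row_ins R0 x = (Some y, R0') -> colok R0' (row_ins R1 y).2.
Proof.
move=> p0 /colokP [s01 c01] E.
have xy : x < y by apply: (@row_ins_bump R0); rewrite E.
move: E; rewrite row_insE; case: ifP => // h0 [Ey ER0].
move: Ey ER0; set k := find (ltn x) R0 => Ey ER0.
have ks : k < size R0 by rewrite -has_find.
have sR0' : size R0' = size R0 by rewrite -ER0 size_set_nth; apply/maxn_idPr.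
have nR0' : forall c, nth 0 R0' c = if c == k then x else nth 0 R0 c.
  by move=> c; rewrite -ER0 nth_set_nth.
have yk : forall c, c < k -> nth 0 R0 c < y.
  by move=> c ck; rewrite -Ey; apply: pw_nth.
rewrite row_insE; case: ifP => h1 /=.
- set k' := find (ltn y) R1.
  have k's : k' < size R1 by rewrite -has_find.
  have k'k : k' <= k.
    case: (ltnP k (size R1)) => kR1; last by apply: ltnW; apply: leq_trans k's kR1.
    rewrite leqNgt; apply/negP => kk'.
    have := before_find 0 kk'; rewrite -/k' => /negbT; rewrite -leqNgt.
    by have := c01 k kR1; rewrite Ey; lia.
  apply/colokP; rewrite size_set_nth (maxn_idPr k's) sR0'; split => // c cs.
  rewrite nR0' nth_set_nth /=.
  case: (c =P k') => [->|ck'].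
    case: (k' =P k) => [_|kk]; first exact: xy.
    apply: yk; rewrite ltn_neqAle k'k andbT; exact/eqP.
  case: (c =P k) => [ck|ck].
    by subst c; have := c01 k cs; rewrite Ey; lia.
  exact: c01.
- have kR1 : size R1 <= k.
    rewrite leqNgt; apply/negP => kR1.
    move/negbT/hasPn: h1 => /(_ (nth 0 R1 k)); rewrite mem_nth // => /(_ isT).
    by have := c01 k kR1; rewrite Ey /= => ->.
  apply/colokP; rewrite size_rcons sR0'; split; first by apply: leq_ltn_trans kR1 ks.
  move=> c; rewrite ltnS leq_eqVlt => /orP [/eqP ->|cs].
    rewrite nth_rcons ltnn eqxx nR0'.
    case: (size R1 =P k) => [_|kk]; first exact: xy.
    apply: yk; rewrite ltn_neqAle kR1 andbT; exact/eqP.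
  rewrite nth_rcons cs nR0'.
  case: (c =P k) => [ck|ck]; last exact: c01.
  by move: cs; rewrite ck; lia.
Qed.

Lemma colok_rcons R0 R1 x : colok R0 R1 -> colok (rcons R0 x) R1.
Proof.
move/colokP => [s c]; apply/colokP; rewrite size_rcons; split; first by apply: leqW.
by move=> i iR; rewrite nth_rcons (leq_trans iR s); apply: c.
Qed.

Lemma tab_ins_head T y : exists rest, tab_ins T y = (row_ins (head [::] T) y).2 :: rest.
Proof.
case: T => [|R T] /=; first by exists [::].
by case: (row_ins R y) => [[z|] r']; eexists.
Qed.

Lemma tab_ins_colok T x : all (pairwise ltn) T -> sorted colok T ->
  sorted colok (tab_ins T x).
Proof.
elim: T x => [|R0 T IH] x //= /andP [pR0 pT] sT.
have sT' : sorted colok T by case: T sT {IH pT} => //= R1 T /andP [].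
have c01 : colok R0 (head [::] T).
  by case: T sT {IH pT sT'} => [|R1 T] /= ; [rewrite /colok | case/andP].
case E: (row_ins R0 x) => [[y|] r'] /=.
- have [rest Er] := tab_ins_head T y.
  have := IH y pT sT'; rewrite Er /= => ->; rewrite andbT.
  exact: colok_ins pR0 c01 E.
- rewrite (row_ins_none E).
  case: T sT {IH pT sT' c01} => [|R1 T] //= /andP [c p]; rewrite p andbT.
  exact: colok_rcons.
Qed.

Lemma rsk_colok w : uniq w -> sorted colok (rsk_P w).
Proof.
elim/last_ind: w => [|w x IH] //; rewrite rcons_uniq => /andP [xw uw].
have [H1 _] := rsk_rows uw; rewrite rsk_P_rcons.
by apply: tab_ins_colok => //; apply: IH.
Qed.


Definition Sj j (T : seq (seq nat)) := \sum_(i < j) size (nth [::] T i).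

Lemma Sj0 T : Sj 0 T = 0. Proof. by rewrite /Sj big_ord0. Qed.
Lemma Sj_cons j R T : Sj j.+1 (R :: T) = size R + Sj j T.
Proof. by rewrite /Sj big_ord_recl. Qed.

Fixpoint crows (k0 : nat) (T : seq (seq nat)) : seq (seq (nat * nat)) :=
  if T is R :: T' then [seq (x, k0) | x <- R] :: crows k0.+1 T' else [::].

Lemma flatten_rev_cons (A : Type) (r : seq A) X :
  flatten (rev (r :: X)) = flatten (rev X) ++ r.
Proof. by rewrite rev_cons -cats1 flatten_cat /= cats0. Qed.

Lemma crows_unzip k0 T : unzip1 (flatten (rev (crows k0 T))) = reading T.
Proof.
elim: T k0 => [|R T IH] k0 //=.
rewrite flatten_rev_cons reading_cons /unzip1 map_cat -/(unzip1 _) IH.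
by rewrite -map_comp map_id.
Qed.

Lemma F_const k k0 R : F k [seq (x, k0) | x <- R] = if k0 == k then R else [::].
Proof.
elim: R => [|x R IH] /=; first by case: ifP.
by rewrite F_cons IH; case: (k0 == k).
Qed.

Lemma F_crows_lt k k0 T : k < k0 -> F k (flatten (rev (crows k0 T))) = [::].
Proof.
elim: T k0 => [|R T IH] k0 //= kk0.
rewrite flatten_rev_cons F_cat F_const IH; last by apply: ltnW.
by case: eqP => // E; move: kk0; rewrite E ltnn.
Qed.

Lemma crows_pw k k0 T : all (pairwise ltn) T ->
  pairwise ltn (F k (flatten (rev (crows k0 T)))).
Proof.
elim: T k0 => [|R T IH] k0 //= /andP [pR pT].
rewrite flatten_rev_cons F_cat F_const; case: eqP => [<-|_].
  by rewrite F_crows_lt.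
by rewrite cats0; apply: IH.
Qed.

Lemma crows_val (j k0 : nat) T : vl j (flatten (rev (crows k0 T))) = Sj (j - k0) T.
Proof.
elim: T k0 => [|R T IH] k0 /=; first by rewrite /vl /Sj big1 // => i _; rewrite nth_nil.
rewrite flatten_rev_cons val_cat IH /vl count_map /=.
case: (ltnP k0 j) => kj.
  have -> : j - k0 = (j - k0.+1).+1 by lia.
  have -> : count (preim (pair^~ k0) (fun e : nat * nat => e.2 < j)) R = size R.
    by rewrite -count_predT; apply: eq_count => x /=; rewrite kj.
  by rewrite Sj_cons addnC.
have -> : j - k0 = 0 by lia.
have -> : j - k0.+1 = 0 by lia.
have -> : count (preim (pair^~ k0) (fun e : nat * nat => e.2 < j)) R = 0.
  by rewrite -(count_pred0 R); apply: eq_count => x /=; rewrite ltnNge kj.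
by rewrite !Sj0.
Qed.

Lemma ach_tab j T : all (pairwise ltn) T -> ach j (reading T) (Sj j T).
Proof.
move=> pT; exists (flatten (rev (crows 0 T))); split; first exact: crows_unzip.
split; first by move=> k _; apply: crows_pw.
by rewrite crows_val subn0.
Qed.


Lemma decompose (s : seq (nat * nat)) T : unzip1 s = reading T ->
  exists CT, map (map fst) CT = T /\ s = flatten (rev CT).
Proof.
elim: T s => [|R T IH] s /=.
  by case: s => // _; exists [::].
rewrite reading_cons => /unzip_split [s1 [s2 [-> [H1 H2]]]].
have [CT [E1 E2]] := IH s1 H1.
by exists (s2 :: CT); split; [rewrite /= E1 -H2 | rewrite flatten_rev_cons E2].
Qed.

Lemma subseq_filter2 (T : eqType) (a : pred T) s1 s2 :
  subseq s1 s2 -> subseq (filter a s1) (filter a s2).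
Proof.
move=> H; rewrite subseq_filter filter_all /=.
exact: subseq_trans (filter_subseq _ _) H.
Qed.

Lemma F_subseq k s' s : subseq s' s -> subseq (F k s') (F k s).
Proof. by move=> H; apply: map_subseq; apply: subseq_filter2. Qed.

Lemma ok_subseq j s' s : subseq s' s -> ok j s -> ok j s'.
Proof. by move=> H Ho k kj; apply: subseq_pairwise (F_subseq k H) (Ho k kj). Qed.

Lemma count_split j (h : seq (nat * nat)) :
  count (fun e => e.2 < j.+1) h = count (fun e => e.2 < j) h + count (fun e => e.2 == j) h.
Proof.
elim: h => [|[a c] h IH] //=; rewrite IH ltnS leq_eqVlt.
case: (c =P j) => [->|cj] /=; first by rewrite ltnn; lia.
by lia.
Qed.

Lemma size_F k h : size (F k h) = count (fun e => e.2 == k) h.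
Proof. by rewrite size_map size_filter. Qed.

Definition gtr (a b : nat) : bool := b < a.

Lemma size_le1 l : pairwise ltn l -> pairwise gtr l -> size l <= 1.
Proof.
case: l => [|a [|b l]] //=; rewrite /gtr.
by case/andP => /andP [ab _] _ /andP [/andP [ba _] _]; move: ab ba; lia.
Qed.

Lemma distinct_colors j h : ok j h -> pairwise gtr (unzip1 h) -> vl j h <= j.
Proof.
move=> Ho Hg; elim: j Ho => [|j IH] Ho.
  by rewrite /vl (eq_count (a2 := pred0)) ?count_pred0.
rewrite /vl count_split -/(vl j h).
have Hj : count (fun e => e.2 == j) h <= 1.
  rewrite -size_F; apply: size_le1; first exact: Ho.
  apply: subseq_pairwise Hg; apply: map_subseq; exact: filter_subseq.
have := IH (fun k kj => Ho k (ltnW kj)); lia.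
Qed.

Definition hds (CT : seq (seq (nat * nat))) :=
  [seq head (0, 0) r | r <- rev CT & r != [::]].

Lemma hds_cons r CT : hds (r :: CT) = hds CT ++ (if r != [::] then [:: head (0,0) r] else [::]).
Proof. by rewrite /hds rev_cons filter_rcons; case: ifP; rewrite ?map_rcons ?cats1 ?cats0. Qed.

Lemma val_split j CT :
  vl j (flatten (rev CT)) = vl j (flatten (rev (map behead CT))) + vl j (hds CT).
Proof.
elim: CT => [|r CT IH] //=; rewrite flatten_rev_cons hds_cons flatten_rev_cons !val_cat IH.
case: r => [|e r] /=; rewrite /vl /=; lia.
Qed.

Lemma sub_rest (CT : seq (seq (nat * nat))) : subseq (flatten (rev (map behead CT))) (flatten (rev CT)).
Proof.
elim: CT => [|r CT IH] //=; rewrite !flatten_rev_cons; apply: cat_subseq => //.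
case: r => [|e r] //=; exact: subseq_cons.
Qed.

Lemma sub_hds (CT : seq (seq (nat * nat))) : subseq (hds CT) (flatten (rev CT)).
Proof.
elim: CT => [|r CT IH] //=; rewrite hds_cons flatten_rev_cons; apply: cat_subseq => //.
case: r => [|e r] //=; by rewrite eqxx sub0seq.
Qed.

Lemma unzip_hds (CT : seq (seq (nat * nat))) : unzip1 (hds CT) =
  [seq head 0 R | R <- rev (map (map fst) CT) & R != [::]].
Proof.
elim: CT => [|r CT IH] //=; rewrite hds_cons rev_cons filter_rcons /unzip1 map_cat -/(unzip1 _) IH.
by case: r => [|e r] /=; rewrite ?map_rcons ?cats1 ?cats0.
Qed.

Lemma colok_nil R : colok [::] R -> R = [::].
Proof. by case: R => // x R /colokP [] /=. Qed.

Lemma sorted_nil_all T : sorted colok ([::] :: T) -> all (fun R => R == [::]) T.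
Proof.
elim: T => [|R T IH] //= /andP [/colok_nil -> p]; rewrite eqxx /=; exact: IH.
Qed.

Definition H (T : seq (seq nat)) := [seq head 0 R | R <- T & R != [::]].

Lemma H_nil T : all (fun R => R == [::]) T -> H T = [::].
Proof. by elim: T => [|R T IH] //= /andP [/eqP -> /IH]. Qed.

Lemma heads_path T R0 : sorted colok (R0 :: T) -> R0 != [::] ->
  path ltn (head 0 R0) (H T).
Proof.
elim: T R0 => [|R1 T IH] R0 //= /andP [c01 sT] nR0.
case: (R1 =P [::]) => [E|/eqP nR1] /=.
  by subst R1; rewrite H_nil //; apply: sorted_nil_all.
rewrite /H /= nR1 -/(H T) /= IH // andbT.
move/colokP: c01 => [_ /(_ 0)]; rewrite -!nth0; apply.
by case: R1 nR1 {sT}.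
Qed.

Lemma heads_inc T : sorted colok T -> sorted ltn (H T).
Proof.
case: T => [|R0 T] // sT; rewrite /H /=; case: (R0 =P [::]) => [E|/eqP nR0] /=.
  by subst R0; rewrite -/(H T) H_nil //; apply: sorted_nil_all.
exact: heads_path.
Qed.

Lemma hds_dec T : sorted colok T -> pairwise gtr [seq head 0 R | R <- rev T & R != [::]].
Proof.
move=> sT; rewrite -sorted_pairwise; last by move=> a b c; rewrite /gtr; lia.
rewrite filter_rev map_rev rev_sorted; exact: heads_inc.
Qed.

Lemma colok_behead R R' : colok R R' -> colok (behead R) (behead R').
Proof.
move/colokP => [s c]; apply/colokP; rewrite !size_behead; split; first by lia.
by move=> i iR; rewrite !nth_behead; apply: c; lia.
Qed.

Lemma sorted_behead T : sorted colok T -> sorted colok (map behead T).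
Proof.
case: T => [|R T] //=; elim: T R => [|R1 T IH] R //= /andP [c p].
by rewrite colok_behead // IH.
Qed.

Lemma nth_behead_map (T : seq (seq nat)) i : nth [::] (map behead T) i = behead (nth [::] T i).
Proof. by elim: T i => [|R T IH] [|i] //=. Qed.

Lemma Sj_behead j T : Sj j T = Sj j (map behead T) + \sum_(i < j) (nth [::] T i != [::]).
Proof.
rewrite /Sj -big_split; apply: eq_bigr => i _; rewrite nth_behead_map size_behead.
by case: (nth [::] T i) => [|x R] //=; rewrite addn1.
Qed.

Lemma prefix_count j T : sorted colok T ->
  \sum_(i < j) (nth [::] T i != [::]) = minn j (count (fun R => R != [::]) T).
Proof.
elim: T j => [|R T IH] j.
  by move=> _; rewrite big1 ?minn0 // => i _; rewrite nth_nil.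
move=> sT; case: j => [|j]; first by rewrite big_ord0 min0n.
rewrite big_ord_recl /= IH; last by case: T sT {IH} => //= R1 T /andP [].
case: (R =P [::]) => [E|/eqP nR] /=.
  subst R; have := sorted_nil_all sT => /allP Ha.
  have -> : count (fun R => R != [::]) T = 0.
    by apply/eqP; rewrite -leqn0 leqNgt -has_count; apply/hasP => -[R RT]; rewrite (eqP (Ha R RT)).
  by rewrite minn0.
by rewrite minnSS.
Qed.

Lemma sumn_behead (T : seq (seq nat)) : sumn (map size (map behead T)) + count (fun R => R != [::]) T =
  sumn (map size T).
Proof. elim: T => [|R T IH] //=; rewrite -IH; case: R => [|x R] /=; lia. Qed.

Lemma count_nonempty0 (T : seq (seq nat)) : count (fun R => R != [::]) T = 0 -> sumn (map size T) = 0.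
Proof. by elim: T => [|[|x R] T IH] //=. Qed.

Lemma size_frev (CT : seq (seq (nat * nat))) : size (flatten (rev CT)) = sumn (map size CT).
Proof. by rewrite size_flatten /shape map_rev sumn_rev. Qed.

Lemma size_mapfst (CT : seq (seq (nat * nat))) : map size (map (map fst) CT) = map size CT.
Proof. by rewrite -map_comp; apply: eq_map => r /=; rewrite size_map. Qed.

Lemma mapfst_behead (CT : seq (seq (nat * nat))) :
  map (map fst) (map behead CT) = map behead (map (map fst) CT).
Proof. by rewrite -!map_comp; apply: eq_map => r /=; rewrite behead_map. Qed.

Lemma count_mapfst (CT : seq (seq (nat * nat))) :
  count (fun R => R != [::]) (map (map fst) CT) = count (fun r => r != [::]) CT.
Proof. by rewrite count_map; apply: eq_count => -[]. Qed.

Lemma bnd_tab j N : forall CT : seq (seq (nat * nat)), sumn (map size CT) <= N ->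
  sorted colok (map (map fst) CT) -> ok j (flatten (rev CT)) ->
  vl j (flatten (rev CT)) <= Sj j (map (map fst) CT).
Proof.
elim: N => [|N IH] CT hN sT Ho.
  by apply: leq_trans (count_size _ _) _; rewrite size_frev; move: hN; rewrite leqn0 => /eqP ->.
case: (sumn (map size CT) =P 0) => [E|nE].
  by apply: leq_trans (count_size _ _) _; rewrite size_frev E.
set T := map (map fst) CT.
have cnt0 : 0 < count (fun R => R != [::]) T.
  rewrite lt0n; apply/eqP => /count_nonempty0; rewrite size_mapfst; exact: nE.
have hN' : sumn (map size (map behead CT)) <= N.
  have := sumn_behead T; rewrite -mapfst_behead !size_mapfst; lia.
have sT' : sorted colok (map (map fst) (map behead CT)).
  by rewrite mapfst_behead; apply: sorted_behead.
have Ho' : ok j (flatten (rev (map behead CT))) by apply: ok_subseq (sub_rest CT) Ho.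
have := IH _ hN' sT' Ho'; rewrite mapfst_behead => IH'.
rewrite val_split (Sj_behead j T) (prefix_count j sT).
apply: leq_add => //.
have Hh1 : vl j (hds CT) <= j.
  apply: distinct_colors; first exact: ok_subseq (sub_hds CT) Ho.
  by rewrite unzip_hds; apply: hds_dec.
have Hh2 : vl j (hds CT) <= count (fun R => R != [::]) T.
  apply: leq_trans (count_size _ _) _.
  by rewrite /hds size_map size_filter count_rev /T count_mapfst.
by rewrite leq_min Hh1 Hh2.
Qed.

Lemma bnd_tab' j T : sorted colok T -> forall m, ach j (reading T) m -> m <= Sj j T.
Proof.
move=> sT m [s [Hs [Ho Hv]]].
have [CT [E1 E2]] := decompose Hs; subst s T.
apply: leq_trans Hv _; exact: (bnd_tab (leqnn _)).
Qed.

Lemma greene j w : uniq w ->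
  ach j w (Sj j (rsk_P w)) /\ forall m, ach j w m -> m <= Sj j (rsk_P w).
Proof.
move=> uw; have K := knuth_ach (rsk_knuth uw) j.
have [H1 _] := rsk_rows uw.
split; first by rewrite -K; apply: ach_tab.
by move=> m; rewrite -K; apply: bnd_tab'; apply: rsk_colok.
Qed.


Definition G j w := Sj j (rsk_P w).

Lemma uniq_swap (u v : seq nat) a b : uniq (u ++ a :: b :: v) -> uniq (u ++ b :: a :: v).
Proof.
apply: etrans; apply: perm_uniq; apply/seq.permP => p.
rewrite !count_cat /=; lia.
Qed.

Lemma step_bounds j u v a b : a < b -> uniq (u ++ a :: b :: v) ->
  G j (u ++ b :: a :: v) <= G j (u ++ a :: b :: v) <= G j (u ++ b :: a :: v) + 1.
Proof.
move=> ab uw; have uw' := uniq_swap uw.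
have [A1 B1] := greene j uw; have [A2 B2] := greene j uw'.
apply/andP; split.
  by apply: B1; apply: ach_swap.
have := B2 _ (ach_drop ab A1); rewrite /G; lia.
Qed.

Lemma split_swap (w : seq nat) p : p.+1 < size w ->
  w = take p w ++ nth 0 w p :: nth 0 w p.+1 :: drop p.+2 w /\
  swap_adj w p = take p w ++ nth 0 w p.+1 :: nth 0 w p :: drop p.+2 w.
Proof.
elim: p w => [|p IH] [|c w] //= hp.
  by case: w hp => [|d w] //= _; rewrite drop0.
have [E1 E2] := IH w hp; split; first by rewrite {1}E1.
by rewrite /swap_adj /= -/(swap_adj w p) E2.
Qed.

Lemma chain (f : nat -> nat) (d : nat -> bool) t :
  (forall m, m < t -> if d m then f m.+1 <= f m <= f m.+1 + 1 else f m <= f m.+1 <= f m + 1) ->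
  f t <= f 0 + count (fun m => ~~ d m) (iota 0 t) /\ f 0 <= f t + count d (iota 0 t).
Proof.
elim: t => [|t IH] H; first by rewrite /= !addn0.
have [I1 I2] := IH (fun m mt => H m (ltnW mt)).
rewrite -addn1 iotaD !count_cat /=.
have := H t (ltnSn t); rewrite [t + 1]addn1; case: (d t) => /=; lia.
Qed.

Lemma part_Sj j (s : seq (seq nat)) :
  \sum_(i < j) part (map size s) i = Sj j s.
Proof.
apply: eq_bigr => i _; rewrite /part.
case: (ltnP i (size s)) => iS; first by rewrite (nth_map [::]).
by rewrite !nth_default ?size_map.
Qed.

Lemma oneline_uniq n (s : 'S_n) : uniq (oneline s).
Proof.
rewrite /oneline map_inj_uniq ?enum_uniq // => i k /val_inj; exact: perm_inj.
Qed.

Lemma size_oneline n (s : 'S_n) : size (oneline s) = n.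
Proof. by rewrite /oneline size_map size_enum_ord. Qed.

Unset Implicit Arguments.
Theorem lemma2 (n t : nat) (sig : nat -> 'S_n) (pos : nat -> nat) :
  (forall m, m < t -> (pos m).+1 < n /\
     oneline (sig m.+1) = swap_adj (oneline (sig m)) (pos m)) ->
  let s := count (dec_step sig pos) (iota 0 t) in
  let r := count (fun m => ~~ dec_step sig pos m) (iota 0 t) in
  let la := rsk_shape (sig 0) in
  let mu := rsk_shape (sig t) in
  forall j, 1 <= j <= n ->
    (\sum_(i < j) part mu i <= \sum_(i < j) part la i + r) /\
    (\sum_(i < j) part la i <= \sum_(i < j) part mu i + s).
Proof.
move=> H s r la mu j _; rewrite /la /mu /rsk_shape !part_Sj.
apply: (chain (f := fun m => G j (oneline (sig m)))) => m mt.
have [pn Ew] := H m mt.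
set w := oneline (sig m) in Ew *.
have uw : uniq w by apply: oneline_uniq.
have ps : (pos m).+1 < size w by rewrite size_oneline.
have [E1 E2] := split_swap ps.
rewrite Ew E2 /dec_step -/w.
move: E1 E2; set u := take (pos m) w; set a := nth 0 w (pos m);
  set b := nth 0 w (pos m).+1; set v := drop (pos m).+2 w => E1 E2.
rewrite E1 in uw *.
case: ltngtP => ab.
- by apply: step_bounds.
- by apply: step_bounds => //; apply: uniq_swap.
- exfalso; move: uw; rewrite cat_uniq /= inE ab eqxx /=.
  by rewrite !andbF.
Qed.
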